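(* Let $K$ be a sequence with continuous leading block distribution under $\mathcal F$-expansion, with associated function $f_K^*$. Let $\mu\in\mathcal F^*$ with $\mu(1)=1$ such that there is $t\in\mathbb{N}$ with $\mu(k)=0$ for all $k>t$. Then $$f_K^*\big(\phi(\mu|t\cdot\widehat F-1)\big)\le\lim_{n\to\infty}\frac{\#\{k\le n:\mathrm{LB}_t(K_k)\le\mu|t\}}{n}.$$
   Context: $F$: $F_1=1,F_2=2,F_{n+2}=F_{n+1}+F_n$; $\phi$ golden ratio, $\omega=\phi^{-1}$. Zeckendorf expansion $m=\sum_{k=1}^M\epsilon(k)F_{M-k+1}$ (unique, $\epsilon(k)\in\{0,1\}$, $\epsilon(1)=1$, $\epsilon(k)\epsilon(k+1)=0$); $\mathrm{LB}_s(m)=(\epsilon(1),\dots,\epsilon(s))$ if $M\ge s$. Blocks of equal length are compared lexicographically (equivalently by $\mathbf b\cdot\widehat F:=\sum_k\mathbf b(k)\omega^{k-1}$). $\mathcal F^*$: infinite 0/1 sequences $\mu$ with $\mu(k)\mu(k+1)=0$ and no tail equal to $(1,0,1,0,\dots)$; $\mu|s=(\mu(1),\dots,\mu(s))$, $\mu\cdot\widehat F=\sum_{k\ge1}\mu(k)\omega^{k-1}$. The map $\mu\mapsto\phi(\mu\cdot\widehat F-1)$ is a bijection from $\{\mu\in\mathcal F^*:\mu(1)=1\}$ onto $(0,1)$. A sequence $K$ of positive integers approaching $\infty$ has continuous leading block distribution under $\mathcal F$-expansion if: for every $s\ge2$ and every leading block $\mathbf b$ of length $s$ the limit $\lim_n\#\{k\le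 n:\mathrm{LB}_s(K_k)=\mathbf b\}/n$ exists; for every $\mu\in\mathcal F^*$ with $\mu(1)=1$ the limit $\lim_{s\to\infty}\lim_n\#\{k\le n:\mathrm{LB}_s(K_k)\le\mu|s\}/n$ exists; and the function $f_K^*:[0,1]\to[0,1]$ with $f_K^*(0)=0$, $f_K^*(1)=1$, $f_K^*(\phi(\mu\cdot\widehat F-1))$ equal to that limit, is continuous and increasing. *)

(* Defs.v *)
From Stdlib Require Import Reals Lra Lia List ClassicalDescription.
From Coquelicot Require Import Coquelicot.
Import ListNotations.
Open Scope R_scope.

(* Fibonacci numbers F_1 = 1, F_2 = 2, F_{n+2} = F_{n+1} + F_n
   (F 0 = 1 is a dummy value, never used). *)
Fixpoint Fib (n : nat) : nat :=
  match n with
  | O => 1%nat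
  | S O => 1%nat
  | S ((S m) as p) => (Fib p + Fib m)%nat
  end.

Definition phi : R := (1 + sqrt 5) / 2.
Definition omega : R := / phi.

Fixpoint zval (e : list nat) : nat :=
  match e with
  | [] => 0%nat
  | x :: r => (x * Fib (length e) + zval r)%nat
  end.

(* e is the Zeckendorf expansion of m (entries e(k) = nth (k-1) e 0). *)
Definition zeck_exp (m : nat) (e : list nat) : Prop :=
  (forall x, In x e -> x = 0%nat \/ x = 1%nat) /\
  nth 0 e 0%nat = 1%nat /\
  (forall i, (nth i e 0 * nth (S i) e 0)%nat = 0%nat) /\
  m = zval e.

(* LB_s(m) = b : defined only when the expansion has length M >= s. *)
Definition LB (s m : nat) (b : list nat) : Prop :=
  exists e, zeck_exp m e /\ (s <= length e)%nat /\ b = firstn s e.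

Definition is_leading_block (s : nat) (b : list nat) : Prop :=
  exists m, LB s m b.

Fixpoint lex_le (a b : list nat) : Prop :=
  match a, b with
  | [], [] => True
  | x :: a', y :: b' => (x < y)%nat \/ (x = y /\ lex_le a' b')
  | _, _ => False
  end.

(* b . F^ = sum_k b(k) omega^(k-1) *)
Fixpoint bval (b : list nat) : R :=
  match b with
  | [] => 0
  | x :: r => INR x + omega * bval r
  end.

(* Sequences mu indexed from 1 (mu 0 is irrelevant). *)
Definition Fstar (mu : nat -> nat) : Prop :=
  (forall k, (1 <= k)%nat -> (mu k <= 1)%nat) /\
  (forall k, (1 <= k)%nat -> (mu k * mu (S k))%nat = 0%nat) /\
  ~ (exists j, (1 <= j)%nat /\
       forall i, mu (j + 2 * i)%nat = 1%nat /\ mu (j + 2 * i + 1)%nat = 0%nat).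

Definition restr (mu : nat -> nat) (s : nat) : list nat := map mu (seq 1 s).

Definition muF (mu : nat -> nat) : R :=
  Series (fun k => INR (mu (S k)) * omega ^ k).

Fixpoint cnt (P : nat -> Prop) (n : nat) : nat :=
  match n with
  | O => O
  | S n' => (cnt P n' + (if excluded_middle_informative (P n) then 1 else 0))%nat
  end.

Definition ratio (P : nat -> Prop) (n : nat) : R := INR (cnt P n) / INR n.

Definition pos_to_infty (K : nat -> nat) : Prop :=
  (forall k, (1 <= k)%nat -> (0 < K k)%nat) /\
  (forall M, exists N, forall k, (N <= k)%nat -> (M <= K k)%nat).

Definition cont_LBD (K : nat -> nat) (f : R -> R) : Prop :=
  pos_to_infty K /\
  (forall s b, (2 <= s)%nat -> length b = s -> is_leading_block s b ->
     exists l, Un_cv (ratio (fun k => LB s (K k) b)) l) /\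
  (forall mu, Fstar mu -> mu 1%nat = 1%nat ->
     exists (g : nat -> R) (L : R),
       (forall s, Un_cv (ratio (fun k => exists c, LB s (K k) c /\ lex_le c (restr mu s))) (g s)) /\
       Un_cv g L /\
       f (phi * (muF mu - 1)) = L) /\
  f 0 = 0 /\ f 1 = 1 /\
  (forall x, 0 <= x <= 1 -> 0 <= f x <= 1) /\
  (forall x, 0 <= x <= 1 -> forall eps, 0 < eps -> exists delta, 0 < delta /\
     forall y, 0 <= y <= 1 -> Rabs (y - x) < delta -> Rabs (f y - f x) < eps) /\
  (forall x y, 0 <= x <= 1 -> 0 <= y <= 1 -> x <= y -> f x <= f y).

(* Main.v *)
Require Import Defs.
From Stdlib Require Import Reals List.
From Coquelicot Require Import Coquelicot.
From Stdlib Require Import Lra Lia ClassicalDescription.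
Import ListNotations.
Open Scope R_scope.

Lemma cv_le (u v : nat -> R) a b :
  Un_cv u a -> Un_cv v b -> (forall n, u n <= v n) -> a <= b.
Proof.
  intros Hu Hv H. destruct (Rle_or_lt a b) as [h|h]; auto.
  exfalso. destruct (Hu ((a - b)/2)) as [N1 H1]; [lra|].
  destruct (Hv ((a - b)/2)) as [N2 H2]; [lra|].
  specialize (H1 (N1 + N2)%nat ltac:(lia)). specialize (H2 (N1 + N2)%nat ltac:(lia)).
  specialize (H (N1+N2)%nat). unfold R_dist in *.
  apply Rabs_def2 in H1. apply Rabs_def2 in H2. lra.
Qed.

Lemma lex_firstn n : forall a b, lex_le a b -> lex_le (firstn n a) (firstn n b).
Proof.
  induction n; intros a b H; simpl; auto.
  destruct a as [|x a]; destruct b as [|y b]; simpl in *; auto.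
  destruct H as [H|[H1 H2]]; auto.
Qed.

Lemma restr_firstn mu t s : (t <= s)%nat -> firstn t (restr mu s) = restr mu t.
Proof.
  intros H. unfold restr. rewrite firstn_map. f_equal.
  replace s with (t + (s - t))%nat by lia. rewrite seq_app, firstn_app, length_seq.
  rewrite firstn_all2 by (rewrite length_seq; lia). replace (t - t)%nat with 0%nat by lia.
  simpl. apply app_nil_r.
Qed.

Lemma cnt_mono (P Q : nat -> Prop) n : (forall k, P k -> Q k) -> (cnt P n <= cnt Q n)%nat.
Proof.
  intros H; induction n; simpl; auto.
  destruct (excluded_middle_informative (P (S n))); destruct (excluded_middle_informative (Q (S n))); try lia.
  exfalso; auto.
Qed.

Lemma ratio_mono (P Q : nat -> Prop) n : (forall k, P k -> Q k) -> ratio P n <= ratio Q n.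
Proof.
  intros H. unfold ratio. destruct n. simpl. lra.
  unfold Rdiv. apply Rmult_le_compat_r.
  - left. apply Rinv_0_lt_compat. apply lt_0_INR; lia.
  - apply le_INR, cnt_mono, H.
Qed.

Lemma bval_app l x : bval (l ++ [x]) = bval l + INR x * omega ^ length l.
Proof.
  induction l; simpl. ring. rewrite IHl. ring.
Qed.

Lemma restr_S mu n : restr mu (S n) = restr mu n ++ [mu (S n)].
Proof. unfold restr. rewrite seq_S, map_app. reflexivity. Qed.

Lemma bval_sum mu n :
  bval (restr mu (S n)) = sum_f_R0 (fun k => INR (mu (S k)) * omega ^ k) n.
Proof.
  induction n.
  - simpl. unfold restr; simpl. ring.
  - rewrite restr_S, bval_app, IHn. unfold restr. rewrite length_map, length_seq.
    simpl. reflexivity.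
Qed.

Lemma bval_stable mu t : (forall k, (t < k)%nat -> mu k = 0%nat) ->
  forall m, bval (restr mu (t + m)) = bval (restr mu t).
Proof.
  intros H m; induction m.
  - rewrite Nat.add_0_r; auto.
  - replace (t + S m)%nat with (S (t + m)) by lia. rewrite restr_S, bval_app, IHm.
    rewrite H by lia. simpl. ring.
Qed.

Lemma muF_fin mu t : (forall k, (t < k)%nat -> mu k = 0%nat) ->
  muF mu = bval (restr mu t).
Proof.
  intros H. unfold muF. apply is_series_unique. apply is_series_Reals.
  intros eps Heps. exists t. intros n Hn.
  rewrite <- bval_sum. replace (S n) with (t + (S n - t))%nat by lia.
  rewrite bval_stable by auto. unfold Rdist. rewrite Rminus_diag, Rabs_R0. lra.
Qed.

Theorem lemma5p17 (K : nat -> nat) (f : R -> R) (mu : nat -> nat) (t : nat) :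
  cont_LBD K f ->
  Fstar mu -> mu 1%nat = 1%nat ->
  (forall k, (t < k)%nat -> mu k = 0%nat) ->
  exists l,
    Un_cv (ratio (fun k => exists c, LB t (K k) c /\ lex_le c (restr mu t))) l /\
    f (phi * (bval (restr mu t) - 1)) <= l.
Proof.
  intros [_ [_ [Hmu _]]] HF H1 Hz.
  destruct (Hmu mu HF H1) as [g [L [Hg [HL Hf]]]].
  exists (g t). split; auto.
  rewrite <- (muF_fin mu t Hz), Hf.
  assert (Hmon : forall s, (t <= s)%nat -> g s <= g t).
  { intros s Hs. eapply cv_le; [apply (Hg s) | apply (Hg t) |].
    intros n. apply ratio_mono. intros k [c [[e [He [Hl Hc]]] Hlex]].
    exists (firstn t c). split.
    - exists e. split; auto. split; [lia|]. subst c. rewrite firstn_firstn.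
      f_equal; lia.
    - rewrite <- (restr_firstn mu t s Hs). apply lex_firstn; auto. }
  destruct (Rle_or_lt L (g t)) as [h|h]; auto. exfalso.
  destruct (HL (L - g t)) as [N HN]; [lra|].
  specialize (HN (N + t)%nat ltac:(lia)). specialize (Hmon (N + t)%nat ltac:(lia)).
  unfold R_dist in HN. apply Rabs_def2 in HN. lra.
Qed.
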